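(* Let $(X,\phi)$ be an acyclic convex geometry. Then $(X,\phi)$ is ranked if and only if its critical base is ranked.
   Context: All sets are finite. A closure operator $\phi$ on $X$ is extensive, monotone and idempotent on $2^X$. $(X,\phi)$ is standard if $\phi(\emptyset)=\emptyset$ and $\phi(\{x\})\setminus\{x\}$ is closed for each $x$. A unit implicational base $\Sigma$ (set of implications $A\to b$, $A\subseteq X$, $b\in X$) is an implicational base of $(X,\phi)$ if its closed sets (sets $S$ such that for each $A\to b\in\Sigma$, $A\not\subseteq S$ or $b\in S$) are exactly the closed sets of $\phi$. $\Sigma$ is acyclic if the directed graph on $X$ with arcs $x\to y$ whenever some $A\to y\in\Sigma$ has $x\in A$ has no directed cycle; irredundant if removing any implication changes the closed sets. An acyclic convex geometry is a standard closure space admitting an acyclic implicational base. $A$ is a minimal generator of $b$ if $b\in\phi(A)$ and $b\notin\phi(A\setminus\{x\})$ for all $x\in A$. An acyclic convex geometry admits a unique irredundant implicational base all of whose implications $A\to b$ have $A$ a minimal generator of $b$; it is called the critical base. A rank function on $\Sigma$ is a map $\rho:X\to\mathbb{N}$ such that $\rho(a)=\rho(b)+1$ whenever $A\to b\in\Sigma$ and $a\in A$; $\Sigma$ is ranked if it admits a rank function. A convex geometry is ranked if it admits a ranked implicational base. *)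

(* Defs.v *)
From mathcomp Require Import all_boot.
Set Implicit Arguments. Unset Strict Implicit. Unset Printing Implicit Defensive.

Section ConvexGeometry.
Variable X : finType.

Definition implication := ({set X} * X)%type.

Definition closure_operator (phi : {set X} -> {set X}) : Prop :=
  [/\ (forall A : {set X}, A \subset phi A),
      (forall A B : {set X}, A \subset B -> phi A \subset phi B) &
      (forall A : {set X}, phi (phi A) = phi A)].

Definition phi_closed (phi : {set X} -> {set X}) (S : {set X}) : Prop :=
  phi S = S.

Definition standard (phi : {set X} -> {set X}) : Prop :=
  phi set0 = set0 /\ forall x : X, phi_closed phi (phi [set x] :\ x).

Definition sigma_closed (Sigma : {set implication}) (S : {set X}) : Prop :=
  forall A b, (A, b) \in Sigma -> ~~ (A \subset S) \/ b \in S.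

Definition implicational_base (phi : {set X} -> {set X})
  (Sigma : {set implication}) : Prop :=
  forall S : {set X}, sigma_closed Sigma S <-> phi_closed phi S.

Definition sigma_arc (Sigma : {set implication}) : rel X :=
  fun x y => [exists A : {set X}, ((A, y) \in Sigma) && (x \in A)].

(* no directed cycle (self-loops included) *)
Definition acyclic (Sigma : {set implication}) : Prop :=
  ~ exists x y : X, sigma_arc Sigma x y /\ connect (sigma_arc Sigma) y x.

Definition irredundant (Sigma : {set implication}) : Prop :=
  forall i, i \in Sigma ->
    exists S : {set X}, ~ (sigma_closed (Sigma :\ i) S <-> sigma_closed Sigma S).

Definition acyclic_convex_geometry (phi : {set X} -> {set X}) : Prop :=
  [/\ closure_operator phi, standard phi &
      exists Sigma, implicational_base phi Sigma /\ acyclic Sigma].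

Definition minimal_generator (phi : {set X} -> {set X}) (A : {set X}) (b : X)
  : Prop :=
  b \in phi A /\ forall x, x \in A -> b \notin phi (A :\ x).

(* The critical base: the (unique) irredundant implicational base all of
   whose premises are minimal generators of their conclusions. *)
Definition critical_base (phi : {set X} -> {set X})
  (Sigma : {set implication}) : Prop :=
  [/\ implicational_base phi Sigma, irredundant Sigma &
      forall A b, (A, b) \in Sigma -> minimal_generator phi A b].

Definition rank_function (Sigma : {set implication}) (rho : X -> nat) : Prop :=
  forall A b a, (A, b) \in Sigma -> a \in A -> rho a = (rho b + 1)%N.

Definition ranked_base (Sigma : {set implication}) : Prop :=
  exists rho, rank_function Sigma rho.

Definition ranked_geometry (phi : {set X} -> {set X}) : Prop :=
  exists Sigma, implicational_base phi Sigma /\ ranked_base Sigma.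

End ConvexGeometry.

(* Main.v *)
Require Import Defs.
From mathcomp Require Import all_boot.
From Stdlib Require Import Classical.
Set Implicit Arguments. Unset Strict Implicit. Unset Printing Implicit Defensive.

Section Proof.
Variable X : finType.
Variable phi : {set X} -> {set X}.
Hypothesis Hext : forall A : {set X}, A \subset phi A.
Hypothesis Hmono : forall A B : {set X}, A \subset B -> phi A \subset phi B.
Hypothesis Hidem : forall A : {set X}, phi (phi A) = phi A.
Hypothesis H0 : phi set0 = set0.
Variable T : {set implication X}.
Hypothesis HT : implicational_base phi T.
Variable rho : X -> nat.
Hypothesis Hrho : rank_function T rho.

Lemma rule_closedT S B c : (B, c) \in T -> B \subset phi S -> c \in phi S.
Proof.
move=> Hin HB.
have := (HT (phi S)).2 (Hidem S) B c Hin.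
by case=> [/negP|//].
Qed.

Lemma phi_sub (A Y : {set X}) : A \subset Y -> phi Y = Y -> phi A \subset Y.
Proof. by move=> HA HY; rewrite -HY; apply: Hmono. Qed.

Lemma ge_lem k S x : x \in phi S -> k <= rho x ->
  x \in phi (S :&: [set y | k <= rho y]).
Proof.
move=> Hx Hk.
set S' := S :&: _.
set Z := phi S' :|: [set y | rho y < k].
have HZ : sigma_closed T Z.
  move=> B c Hin.
  case: (boolP (B \subset Z)) => HB; last by left.
  right.
  case: (ltnP (rho c) k) => Hc; first by rewrite inE; apply/orP; right; rewrite inE.
  rewrite inE; apply/orP; left; apply (rule_closedT Hin).
  apply/subsetP => y Hy.
  have := subsetP HB y Hy; rewrite !inE => /orP [//|].
  by rewrite (Hrho Hin Hy) ltnNge addn1 (leq_trans Hc (leqnSn _)).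
have HSZ : S \subset Z.
  apply/subsetP => y Hy; rewrite inE.
  case: (ltnP (rho y) k) => Hyk; first by apply/orP; right; rewrite inE.
  apply/orP; left; apply: (subsetP (Hext S')).
  by rewrite inE Hy inE.
have := subsetP (phi_sub HSZ ((HT Z).1 HZ)) x Hx.
by rewrite !inE ltnNge Hk orbF.
Qed.

Lemma exists_rule S x : x \in phi S -> x \notin S ->
  exists B, (B, x) \in T /\ B \subset phi S.
Proof.
move=> Hx HxS.
apply: NNPP => Hne.
set Z := phi S :\ x.
have HZ : sigma_closed T Z.
  move=> B c Hin.
  case: (boolP (B \subset Z)) => HB; last by left.
  right.
  have HB' : B \subset phi S by apply: subset_trans HB (subsetDl _ _).
  rewrite !inE (rule_closedT Hin HB') andbT.
  apply/eqP => Hcx; apply: Hne; exists B; split => //; by rewrite -Hcx.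
have HSZ : S \subset Z.
  apply/subsetP => y Hy; rewrite !inE (subsetP (Hext S) y Hy) andbT.
  by apply/eqP => Hyx; rewrite -Hyx Hy in HxS.
have := subsetP (phi_sub HSZ ((HT Z).1 HZ)) x Hx.
by rewrite !inE eqxx.
Qed.

Lemma strict_lem S x : x \in phi S -> x \notin S ->
  x \in phi (S :&: [set y | rho x < rho y]).
Proof.
move=> Hx HxS.
have [B [Hin HB]] := exists_rule Hx HxS.
apply (rule_closedT Hin).
apply/subsetP => y Hy.
have := ge_lem (k := (rho x).+1) (subsetP HB y Hy).
by rewrite (Hrho Hin Hy) addn1 leqnn => /(_ isT).
Qed.

Variable Sigma : {set implication X}.
Hypothesis Hbase : implicational_base phi Sigma.
Hypothesis Hirr : irredundant Sigma.
Hypothesis Hmin : forall A b, (A, b) \in Sigma -> minimal_generator phi A b.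

Lemma irr_witness A b : (A, b) \in Sigma ->
  exists S, [/\ sigma_closed (Sigma :\ (A, b)) S, A \subset S & b \notin S].
Proof.
move=> Hin.
have [S HS] := Hirr Hin.
exists S.
have HQP : sigma_closed Sigma S -> sigma_closed (Sigma :\ (A, b)) S.
  by move=> H A' b'; rewrite inE => /andP [_ H']; apply: H.
have HP : sigma_closed (Sigma :\ (A, b)) S.
  apply: NNPP => HnP; apply: HS; split => // H; by exfalso.
have HnQ : ~ sigma_closed Sigma S by move=> HQ; apply: HS; split.
case: (boolP (A \subset S)) => HA; case: (boolP (b \in S)) => Hb //.
- exfalso; apply: HnQ => A' b' Hin'.
  case: (eqVneq (A', b') (A, b)) => [[-> ->]|Hne]; first by right.
  by apply: HP; rewrite !inE Hne.
- exfalso; apply: HnQ => A' b' Hin'.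
  case: (eqVneq (A', b') (A, b)) => [[-> ->]|Hne]; first by left.
  by apply: HP; rewrite !inE Hne.
- exfalso; apply: HnQ => A' b' Hin'.
  case: (eqVneq (A', b') (A, b)) => [[-> ->]|Hne]; first by left.
  by apply: HP; rewrite !inE Hne.
Qed.

Lemma notin_prem A b : (A, b) \in Sigma -> b \notin A.
Proof.
move=> Hin; have [S [_ HA Hb]] := irr_witness Hin.
by apply/negP => HbA; rewrite (subsetP HA b HbA) in Hb.
Qed.

Lemma gt_prem A b a : (A, b) \in Sigma -> a \in A -> rho b < rho a.
Proof.
move=> Hin Ha.
have [Hb Hm] := Hmin Hin.
rewrite ltnNge; apply/negP => Hle.
have := strict_lem Hb (notin_prem Hin).
move=> H; have := Hm a Ha; move/negP; apply.
apply: (subsetP (Hmono _)) H.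
apply/subsetP => y; rewrite !inE => /andP [Hy Hyr]; rewrite Hy andbT.
by apply/eqP => Hya; move: Hyr; rewrite Hya ltnNge Hle.
Qed.

Lemma rank_Sigma : rank_function Sigma rho.
Proof.
move=> A b a0 Hin Ha0.
have Hgt := gt_prem Hin Ha0.
case: (eqVneq (rho a0) (rho b).+1) => [->|Hne]; first by rewrite addn1.
have Hge : (rho b).+2 <= rho a0 by rewrite ltn_neqAle eq_sym Hne Hgt.
exfalso.
have [S [HS HA HbS]] := irr_witness Hin.
set r := rho b.
set Y := S :|: [set y | rho y <= r].
have HY : sigma_closed Sigma Y.
  move=> C d Hin'.
  case: (boolP (C \subset Y)) => HC; last by left.
  right.
  case: (leqP (rho d) r) => Hd; first by rewrite !inE Hd orbT.
  have HCS : C \subset S.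
    apply/subsetP => c Hc; have := subsetP HC c Hc; rewrite !inE => /orP [//|].
    by rewrite leqNgt (ltn_trans Hd (gt_prem Hin' Hc)).
  have Hne' : (C, d) != (A, b).
    by apply/eqP => [[_ Hdb]]; move: Hd; rewrite Hdb /r ltnn.
  have := HS C d; rewrite !inE Hne' Hin' => /(_ isT) [/negP //|HdS].
  by rewrite HdS.
have HAY : phi A \subset Y.
  apply: phi_sub; last by apply: (Hbase Y).1.
  by apply: subset_trans HA (subsetUl _ _).
have [Hb _] := Hmin Hin.
have HbA : b \notin A by apply/negP => H; rewrite (subsetP HA b H) in HbS.
have [B [HinB HB]] := exists_rule Hb HbA.
have HBS : B \subset S.
  apply/subsetP => y Hy; have := subsetP HAY y (subsetP HB y Hy).
  by rewrite !inE (Hrho HinB Hy) addn1 /r ltnn orbF.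
set W := S :&: phi B.
have HW : sigma_closed Sigma W.
  move=> C d Hin'.
  case: (boolP (C \subset W)) => HC; last by left.
  right.
  case: (eqVneq (C, d) (A, b)) => [[HC' Hd']|Hne'].
    exfalso.
    have Ha0B : a0 \in phi B.
      by have := subsetP HC a0; rewrite HC' Ha0 inE => /(_ isT) /andP [].
    have := ge_lem Ha0B Hge.
    suff -> : B :&: [set y | (rho b).+2 <= rho y] = set0 by rewrite H0 inE.
    apply/setP => y; rewrite !inE.
    case: (boolP (y \in B)) => Hy //=.
    by rewrite (Hrho HinB Hy) addn1 ltnn.
  have HCS : C \subset S by apply: subset_trans HC (subsetIl _ _).
  have HCB : C \subset phi B by apply: subset_trans HC (subsetIr _ _).
  rewrite inE.
  have := HS C d; rewrite !inE Hne' Hin' => /(_ isT) [/negP //|->] /=.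
  have := (Hbase (phi B)).2 (Hidem B) C d Hin'.
  by case=> [/negP //|].
have HWW : phi W = W by apply: (Hbase W).1.
have HBW : B \subset W by rewrite subsetI HBS Hext.
have HbB : b \in phi B by apply: rule_closedT HinB (Hext B).
have := subsetP (phi_sub HBW HWW) b HbB.
by rewrite inE (negbTE HbS).
Qed.

End Proof.

Theorem theorem2 (X : finType) (phi : {set X} -> {set X})
  (Hacg : acyclic_convex_geometry phi)
  (Sigma : {set implication X}) (Hcrit : critical_base phi Sigma) :
  ranked_geometry phi <-> ranked_base Sigma.
Proof.
case: Hacg => [[Hext Hmono Hidem] [H0 _] _].
case: Hcrit => Hbase Hirr Hmin.
split.
- move=> [T [HT [rho Hrho]]].
  exists rho.
  exact: (rank_Sigma Hext Hmono Hidem H0 HT Hrho Hbase Hirr Hmin).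
- move=> HR; by exists Sigma.
Qed.
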